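(* Let $F$ be Thompson's group with the infinite presentation $\langle x_0,x_1,x_2,\ldots \mid x_i^{-1}x_nx_i=x_{n+1} \text{ for all } i<n\rangle$, and let $w\in F$. Let $\alpha$ be the unique normal form of $w$. Then $\alpha$ is a geodesic representative of $w$ with respect to the word metric on $F$ given by the infinite generating set $\{x_0,x_1,x_2,\ldots\}$; that is, no word in the letters $x_i^{\pm1}$ representing $w$ is shorter than $\alpha$.
   Context: Every element of $F$ can be written in normal form $x_{a_1}^{r_1}x_{a_2}^{r_2}\cdots x_{a_k}^{r_k}x_{b_l}^{-s_l}\cdots x_{b_2}^{-s_2}x_{b_1}^{-s_1}$ with all $r_i,s_i>0$, $0\le a_1<a_2<\cdots<a_k$ and $0\le b_1<b_2<\cdots<b_l$. This normal form is unique (the ''unique normal form'') if one additionally requires that whenever both $x_i$ and $x_i^{-1}$ occur, at least one of $x_{i+1}$ or $x_{i+1}^{-1}$ also occurs. The length of a word is the sum of the absolute values of its exponents. *)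

(* Defs.v *)
From mathcomp Require Import all_boot.
Set Implicit Arguments. Unset Strict Implicit. Unset Printing Implicit Defensive.

(* A letter x_i^{+1} is (i, true); a letter x_i^{-1} is (i, false). *)
Definition letter := (nat * bool)%type.
Definition word := seq letter.

Definition wlen (u : word) : nat := size u.

Inductive F_eq : word -> word -> Prop :=
| F_refl u : F_eq u u
| F_sym u v : F_eq u v -> F_eq v u
| F_trans u v w : F_eq u v -> F_eq v w -> F_eq u w
| F_ctx p q u v : F_eq u v -> F_eq (p ++ u ++ q) (p ++ v ++ q)
| F_cancel_pn n : F_eq [:: (n, true); (n, false)] [::]
| F_cancel_np n : F_eq [:: (n, false); (n, true)] [::]
| F_rel i n : i < n ->
    F_eq [:: (i, false); (n, true); (i, true)] [:: (n.+1, true)].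

(* The word x_{a_1}^{r_1} ... x_{a_k}^{r_k} x_{b_l}^{-s_l} ... x_{b_1}^{-s_1}. *)
Definition nf_word (a r b s : seq nat) : word :=
  flatten [seq nseq rk (ak, true) | '(ak, rk) <- zip a r]
  ++ flatten (rev [seq nseq sk (bk, false) | '(bk, sk) <- zip b s]).

Definition normal_form_data (a r b s : seq nat) : Prop :=
  size a = size r /\ size b = size s /\
  all (fun k => 0 < k) r /\ all (fun k => 0 < k) s /\
  sorted ltn a /\ sorted ltn b.

Definition unique_normal_form (alpha : word) : Prop :=
  exists a r b s, normal_form_data a r b s /\
    (forall i, i \in a -> i \in b -> (i.+1 \in a) || (i.+1 \in b)) /\
    alpha = nf_word a r b s.

(* Main.v *)
Require Import Defs.
From mathcomp Require Import all_boot.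
From mathcomp Require Import zify.
From Stdlib Require Import FunctionalExtensionality.
Set Implicit Arguments. Unset Strict Implicit.

Definition stream := nat -> bool.
Definition scons (b : bool) (s : stream) : stream :=
  fun n => if n is k.+1 then s k else b.
Definition stl (s : stream) : stream := fun n => s n.+1.
Definition pt := (nat * stream)%type.

Definition fpos (i : nat) (x : pt) : pt :=
  let: (k, s) := x in
  if k < i then (k, s) else if k == i then (i, scons false s)
  else if k == i.+1 then (i, scons true s) else (k.-1, s).
Definition fneg (i : nat) (x : pt) : pt :=
  let: (k, s) := x in
  if k < i then (k, s) else if k == i then
    (if s 0 then (i.+1, stl s) else (i, stl s))
  else (k.+1, s).

Ltac crush :=
  repeat (match goal with |- context [if ?b then _ else _] =>
            let E := fresh "E" in case E: b => /= end);
  try (by congr (_, _); lia); try lia.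

Lemma I1 i x : fneg i (fpos i x) = x.
Proof. case: x => k s; rewrite /fpos /fneg; crush. Qed.

Lemma scons_eta s : scons (s 0) (stl s) = s.
Proof. apply: functional_extensionality => -[|n] //. Qed.

Lemma I2 i x : fpos i (fneg i x) = x.
Proof.
case: x => k s; rewrite /fneg.
case: (ltngtP k i) => H.
- by rewrite /fpos H.
- rewrite /fpos; have -> : (k.+1 < i) = false by lia.
  have -> : (k.+1 == i) = false by lia.
  have -> : (k.+1 == i.+1) = false by lia.
  by [].
- subst k; case E: (s 0); rewrite /fpos.
  + rewrite ltnNge leqnSn /= eqn_leq ltnn /= eqxx -E scons_eta //.
  + by rewrite ltnn eqxx -E scons_eta.
Qed.

Lemma I3 i n x : i < n -> fpos n (fpos i x) = fpos i (fpos n.+1 x).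
Proof. case: x => k s Hi; rewrite /fpos; crush. Qed.

Lemma I4 c i y : c < i -> fneg i (fpos c y) = fpos c (fneg i.+1 y).
Proof. case: y => k s Hi; rewrite /fpos /fneg; crush. Qed.

Lemma I5 i c y : i < c -> fneg i (fpos c y) = fpos c.+1 (fneg i y).
Proof. case: y => k s Hi; rewrite /fpos /fneg; crush. Qed.

Definition fl (l : letter) : pt -> pt := if l.2 then fpos l.1 else fneg l.1.
Definition act (u : word) (x : pt) : pt := foldr fl x u.
Definition actP (p : seq nat) (x : pt) : pt := foldr fpos x p.
Definition actN (q : seq nat) (x : pt) : pt := foldl (fun y c => fneg c y) x q.
Definition G p q x := actP p (actN q x).

Lemma act_cat u v x : act (u ++ v) x = act u (act v x).
Proof. by rewrite /act foldr_cat. Qed.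

Lemma sound u v : F_eq u v -> forall x, act u x = act v x.
Proof.
elim => //=.
- by move=> ? ? ? ? H1 ? H2 x; rewrite H1 H2.
- by move=> p q u' v' ? H x; rewrite !act_cat H.
- by move=> n x; rewrite /fl /= I2.
- by move=> n x; rewrite /fl /= I1.
- by move=> i n Hin x; rewrite /fl /= I3 // I1.
Qed.

Fixpoint push (i : nat) (p q : seq nat) : seq nat * seq nat :=
  match p with
  | [::] => ([::], rcons q i)
  | c :: p0 => if c < i then let pq := push i.+1 p0 q in (c :: pq.1, pq.2)
               else if c == i then (p0, q)
               else let pq := push i p0 q in (c.+1 :: pq.1, pq.2)
  end.

Lemma actN_rcons q c x : actN (rcons q c) x = fneg c (actN q x).
Proof. by rewrite /actN -cats1 foldl_cat. Qed.

Lemma push_spec p : forall i q,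
  (forall x, fneg i (G p q x) = G (push i p q).1 (push i p q).2 x) /\
  size (push i p q).1 + size (push i p q).2 <= size p + size q + 1.
Proof.
elim: p => [|c p IH] i q /=.
  by split => [x|]; rewrite /G /= ?actN_rcons // size_rcons; lia.
case: ltngtP => H /=.
- have [H1 H2] := IH i.+1 q; split; last by lia.
  by move=> x; rewrite /G /= I4 //; congr fpos; exact: H1.
- have [H1 H2] := IH i q; split; last by lia.
  by move=> x; rewrite /G /= I5 //; congr fpos; exact: H1.
- subst c; split; last by lia.
  by move=> x; rewrite /G /= I1.
Qed.

Lemma S1 (b : word) : exists p q, size p + size q <= size b /\
  forall x, act b x = G p q x.
Proof.
elim: b => [|[i []] b [p [q [Hs H]]]] /=.
- by exists [::], [::].
- exists (i :: p), q; split; first by rewrite /=; lia.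
  by move=> x; rewrite /act /= /fl /= -/(act b x) H.
- have [H1 H2] := push_spec p i q.
  exists (push i p q).1, (push i p q).2; split; first by lia.
  by move=> x; rewrite /act /= /fl /= -/(act b x) H H1.
Qed.

Lemma actN_fix q k s : all (fun c => k < c) q -> actN q (k, s) = (k, s).
Proof.
elim: q => //= c q IH /andP[Hc Hq].
by rewrite /fneg Hc IH.
Qed.

Lemma actP_fix p k s : all (fun c => k < c) p -> actP p (k, s) = (k, s).
Proof.
elim: p => //= c p IH /andP[Hc Hq].
by rewrite IH // /fpos Hc.
Qed.

Lemma actP_A p m s : all (fun c => m <= c) p ->
  (actP p (m, s)).1 = m /\ (m \in p -> (actP p (m, s)).2 0 = false).
Proof.
elim: p => [|c p IH] //= /andP[Hc Hp].
have [H1 H2] := IH Hp.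
case: (actP p (m, s)) H1 H2 => k s' /= Hk H2; subst k.
rewrite in_cons /fpos.
by case: ltngtP Hc.
Qed.

Lemma actN_up q m x : all (fun c => m <= c) q -> m < x.1 -> m < (actN q x).1.
Proof.
elim: q x => [|c q IH] x //= /andP[Hc Hq] Hx.
apply: IH => //; case: x Hx => k s /= Hx; rewrite /fneg.
crush.
Qed.

Lemma actP_up p m x : all (fun c => m < c) p -> m < x.1 -> m < (actP p x).1.
Proof.
elim: p => [|c p IH] //= /andP[Hc Hp] Hx.
have := IH Hp Hx; case: (actP p x) => k s /= Hk; rewrite /fpos.
crush.
Qed.

Lemma actN_B q m t : all (fun c => m <= c) q -> m \in q ->
  m < (actN q (m, scons true t)).1.
Proof.
elim: q => [|c q IH] //= /andP[Hc Hq]; rewrite in_cons.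
case: (ltngtP m c) Hc => // H _.
- by move=> /= Hm; apply: IH.
- by move=> _; apply: actN_up => //=; rewrite H.
Qed.

Lemma caseA p q m : m \in p -> all (fun c => m <= c) p -> all (fun c => m < c) q ->
  forall s, (G p q (m, s)).1 = m /\ (G p q (m, s)).2 0 = false.
Proof.
move=> Hm Hp Hq s; rewrite /G actN_fix //.
by have [-> ->] := @actP_A p m s Hp.
Qed.

Lemma caseB p q m : m \in q -> all (fun c => m < c) p -> all (fun c => m <= c) q ->
  forall t, m < (G p q (m, scons true t)).1.
Proof.
move=> Hm Hp Hq t; rewrite /G.
by apply: actP_up => //; apply: actN_B.
Qed.

Lemma fixG p q m : all (fun c => m <= c) p -> all (fun c => m <= c) q ->
  forall k s, k < m -> G p q (k, s) = (k, s).
Proof.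
move=> Hp Hq k s Hk; rewrite /G actN_fix ?actP_fix //.
- by apply/allP => c /(allP Hp); lia.
- by apply/allP => c /(allP Hq); lia.
Qed.

Lemma actNP q x : actN q (actP q x) = x.
Proof. by elim: q x => //= c q IH x; rewrite I1 -/(actN _ _) IH. Qed.

Lemma actPN q x : actP q (actN q x) = x.
Proof.
elim/last_ind: q x => //= q c IH x.
by rewrite actN_rcons /actP foldr_rcons -/(actP _ _) /= ?IH I2.
Qed.

Lemma peelP (p : seq nat) (m : nat) : m \in p -> all (fun c => m <= c) p ->
  exists p', size p' = (size p).-1 /\ forall x, actP p x = fpos m (actP p' x).
Proof.
elim: p => [|c p IH] //=; rewrite in_cons => Hm /andP[Hc Hp].
case: (eqVneq m c) Hm => [<- _|Hne /= Hm].
  by exists p.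
have [p' [Hs Hx]] := IH Hm Hp.
exists (c.+1 :: p'); split.
  by rewrite /= Hs; case: (p) Hm.
move=> x /=; rewrite Hx I3 //; lia.
Qed.

Lemma peelN (q : seq nat) (m : nat) : m \in q -> all (fun c => m <= c) q ->
  exists q', size q' = (size q).-1 /\ forall x, actN q x = actN q' (fneg m x).
Proof.
move=> Hm Hq; have [q' [Hs Hx]] := @peelP q m Hm Hq.
exists q'; split => // x.
by have := actNP q (actN q' (fneg m x)); rewrite Hx actPN I2.
Qed.

Lemma shiftP P m : all (fun c => m < c) P ->
  forall y, actP P (fpos m y) = fpos m (actP (map S P) y).
Proof.
elim: P => [|c P IH] //= /andP[Hc HP] y.
by rewrite IH // I3.
Qed.

Lemma shiftN Q m : all (fun c => m < c) Q ->
  forall y, actN Q (fpos m y) = fpos m (actN (map S Q) y).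
Proof.
elim: Q => [|c Q IH] //= /andP[Hc HQ] y.
by rewrite I4 // -/(actN _ _) IH.
Qed.

Lemma shiftG P Q m : all (fun c => m < c) P -> all (fun c => m < c) Q ->
  forall x, fneg m (G P Q (fpos m x)) = G (map S P) (map S Q) x.
Proof.
by move=> HP HQ x; rewrite /G shiftN // shiftP // I1.
Qed.

Definition UNF (P Q : seq nat) :=
  [/\ sorted leq P, sorted leq Q &
      forall i, i \in P -> i \in Q -> (i.+1 \in P) || (i.+1 \in Q)].

Lemma sorted_min c P : sorted leq (c :: P) -> all (fun d => c <= d) P.
Proof. by move=> /= H; apply: (order_path_min leq_trans H). Qed.

Lemma sorted_head P h : sorted leq P -> all (fun c => h <= c) P -> h \in P ->
  P = h :: behead P.
Proof.
case: P => // c P Hs /= /andP[Hc HP]; rewrite in_cons.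
case: (eqVneq h c) => [-> //|Hne /= HhP].
have := allP (@sorted_min _ _ Hs) h HhP; lia.
Qed.

Lemma all_lt h l : all (fun c => h <= c) l -> h \notin l -> all (fun c => h < c) l.
Proof.
move=> /allP H Hn; apply/allP => c Hc; have := H c Hc.
case: (eqVneq h c) => [E|]; last by lia.
by move: Hn; rewrite E Hc.
Qed.

Lemma ex_min (l : seq nat) : l != [::] -> exists2 m, m \in l & all (fun c => m <= c) l.
Proof.
elim: l => // c l IH _.
case: l IH => [|d l] IH.
  by exists c; rewrite ?inE //= leqnn.
have [m Hm Ha] := IH isT.
case: (leqP c m) => Hcm.
- exists c; first by rewrite inE eqxx.
  apply/allP => e; rewrite in_cons => /orP[/eqP->//|He]; have := allP Ha e He; lia.
- exists m; first by rewrite inE Hm orbT.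
  apply/allP => e; rewrite in_cons => /orP[/eqP->|He]; [lia|exact: allP Ha e He].
Qed.

Lemma UNF_map P Q : UNF P Q -> UNF (map S P) (map S Q).
Proof.
case=> HP HQ Hc; split.
- by rewrite sorted_map; apply: sub_sorted HP => x y; rewrite /relpre /= ltnS.
- by rewrite sorted_map; apply: sub_sorted HQ => x y; rewrite /relpre /= ltnS.
- move=> i /mapP[j Hj ->]; rewrite (mem_map succn_inj) => HjQ.
  by rewrite !(mem_map succn_inj); apply: Hc.
Qed.

Lemma UNF_tailP h P1 Q : UNF (h :: P1) Q -> all (fun c => h <= c) Q -> UNF P1 Q.
Proof.
case=> HP HQ Hc HhQ; split => //.
- exact: path_sorted HP.
- move=> i HiP HiQ; have := Hc i; rewrite !in_cons HiP orbT => /(_ isT HiQ).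
  have := allP (@sorted_min _ _ HP) i HiP.
  case: (eqVneq i.+1 h) => [E|] /=; last by [].
  lia.
Qed.

Lemma UNF_tailQ h P Q1 : UNF P (h :: Q1) -> all (fun c => h <= c) P -> UNF P Q1.
Proof.
case=> HP HQ Hc HhP; split => //.
- exact: path_sorted HQ.
- move=> i HiP HiQ; have := Hc i; rewrite !in_cons HiQ orbT => /(_ HiP isT).
  have := allP (@sorted_min _ _ HQ) i HiQ.
  case: (eqVneq i.+1 h) => [E|] /=; last by rewrite orbC.
  lia.
Qed.

Definition ones : stream := fun _ => true.

Lemma all_catP (h : nat) P Q : all (fun c => h <= c) (P ++ Q) ->
  all (fun c => h <= c) P /\ all (fun c => h <= c) Q.
Proof. by rewrite all_cat => /andP. Qed.

Lemma G_cons2 h P Q x : G (h :: P) (h :: Q) x = fpos h (G P Q (fneg h x)).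
Proof. by []. Qed.

Lemma NT n : forall P Q, size P + size Q <= n -> UNF P Q ->
  forall h, h \in P ++ Q -> all (fun c => h <= c) (P ++ Q) ->
  exists s, G P Q (h, s) <> (h, s).
Proof.
elim: n => [|n IH] P Q Hn U h Hh Hall.
  by move: Hh; case: P Q Hn {U Hall} => [|? ?] [|? ?].
have [HaP HaQ] := @all_catP _ _ _ Hall.
have U' := U; case: U' => SP SQ Hc.
rewrite mem_cat in Hh.
case hP: (h \in P); case hQ: (h \in Q); rewrite ?hP ?hQ //= in Hh.
- have EP := @sorted_head _ _ SP HaP hP; have EQ := @sorted_head _ _ SQ HaQ hQ.
  set P1 := behead P in EP; set Q1 := behead Q in EQ.
  have U1 : UNF P1 Q1.
    rewrite EP EQ in U; case: U => S1 S2 Hc1; split.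
    - exact: path_sorted S1.
    - exact: path_sorted S2.
    - move=> i Hi1 Hi2.
      have := Hc1 i; rewrite !in_cons Hi1 Hi2 !orbT => /(_ isT isT).
      have := allP (@sorted_min _ _ S1) i Hi1.
      case: (eqVneq i.+1 h) => [E|] /=; [lia|by []].
  have Hh1 : h.+1 \in P1 ++ Q1.
    have := Hc h hP hQ; rewrite {1}EP {1}EQ !in_cons mem_cat.
    by rewrite (gtn_eqF (ltnSn h)).
  have Hne : P1 ++ Q1 != [::] by case: (P1 ++ Q1) Hh1.
  have [h' Hh' Ha'] := @ex_min _ Hne.
  have Hhh' : h <= h'.
    move: Hh'; rewrite mem_cat => /orP[H|H].
    - by have := allP HaP h'; rewrite EP in_cons H orbT => /(_ isT).
    - by have := allP HaQ h'; rewrite EQ in_cons H orbT => /(_ isT).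
  have Hh'h : h' <= h.+1 by have := allP Ha' _ Hh1.
  have [s Hs] : exists s, G P1 Q1 (h', s) <> (h', s).
    apply: (IH P1 Q1) => //.
    move: Hn; rewrite EP EQ /=; lia.
  set z := fpos h (h', s).
  have Ez : z = (h, z.2).
    rewrite /z /fpos; crush.
  exists (z.2); rewrite -Ez => HG.
  apply: Hs; have := congr1 (fneg h) HG.
  by rewrite /z EP EQ G_cons2 !I1.
- exists ones; have [_ H2] := @caseA _ _ _ hP HaP (@all_lt _ _ HaQ (negbT hQ)) ones.
  move=> E; have := congr1 (fun x => x.2 0) E; rewrite /= H2 /ones; discriminate.
- exists (scons true ones).
  have := @caseB _ _ _ hQ (@all_lt _ _ HaP (negbT hP)) HaQ ones.
  by case: (G P Q _) => k s /= H [E _]; lia.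
Qed.

Lemma G_consP h P Q x : G (h :: P) Q x = fpos h (G P Q x).
Proof. by []. Qed.
Lemma G_consQ h P Q x : G P (h :: Q) x = G P Q (fneg h x).
Proof. by []. Qed.

Lemma minPQ P Q : UNF P Q -> P ++ Q != [::] ->
  exists h, [/\ h \in P ++ Q, all (fun c => h <= c) (P ++ Q) &
                 exists s, G P Q (h, s) <> (h, s)].
Proof.
move=> U Hne; have [h Hh Ha] := @ex_min _ Hne.
exists h; split => //.
exact: (@NT (size P + size Q) P Q (leqnn _) U h Hh Ha).
Qed.

Lemma nonempty P Q p q : UNF P Q -> P ++ Q != [::] ->
  (forall x, G P Q x = G p q x) -> p ++ q != [::].
Proof.
move=> U Hne Heq; have [h [_ _ [s Hs]]] := minPQ U Hne.
by case: p q Heq => [|? ?] [|? ?] // Heq; case: Hs; rewrite Heq.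
Qed.

Ltac slia := rewrite -?subn1; lia.

Lemma core n : forall P Q p q, size p + size q <= n -> UNF P Q ->
  (forall x, G P Q x = G p q x) -> size P + size Q <= size p + size q.
Proof.
elim: n => [|n IH] P Q p q Hn U Heq.
  case E: (P ++ Q) => [|? ?].
    by have := congr1 size E; rewrite size_cat /=; lia.
  have HPQ : P ++ Q != [::] by rewrite E.
  have := nonempty U HPQ Heq.
  by case: p q Hn {Heq} => [|? ?] [|? ?].
case E: (P ++ Q) => [|? ?].
  by have := congr1 size E; rewrite size_cat /=; lia.
have HPQ : P ++ Q != [::] by rewrite E.
have [h [Hh Hall [s Hs]]] := minPQ U HPQ.
have Hpq := nonempty U HPQ Heq.
have [m Hm Hallm] := @ex_min _ Hpq.
have [HaP HaQ] := @all_catP _ _ _ Hall.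
have [Hap Haq] := @all_catP _ _ _ Hallm.
have Hmh : m <= h.
  rewrite leqNgt; apply/negP => Hlt; apply: Hs.
  by rewrite Heq (@fixG p q m Hap Haq h s Hlt).
case: U => SP SQ Hc.
have U : UNF P Q by [].
case: (ltngtP m h) Hmh => // Hmh' _.
-
  have fixm : forall s', G p q (m, s') = (m, s').
    by move=> s'; rewrite -Heq (@fixG P Q h HaP HaQ m s' Hmh').
  have mp : m \in p.
    apply/negPn/negP => Hmp.
    have Hmq : m \in q by move: Hm; rewrite mem_cat (negbTE Hmp).
    have := @caseB p q m Hmq (@all_lt _ _ Hap Hmp) Haq ones.
    by rewrite fixm /= ltnn.
  have mq : m \in q.
    apply/negPn/negP => Hmq.
    have [_ H2] := @caseA p q m mp Hap (@all_lt _ _ Haq Hmq) ones.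
    by move: H2; rewrite fixm.
  have [p' [Hsp Hp']] := @peelP p m mp Hap.
  have [q' [Hsq Hq']] := @peelN q m mq Haq.
  have HaP' : all (fun c => m < c) P.
    by apply/allP => c /(allP HaP); apply: leq_trans.
  have HaQ' : all (fun c => m < c) Q.
    by apply/allP => c /(allP HaQ); apply: leq_trans.
  have Heq' : forall x, G (map S P) (map S Q) x = G p' q' x.
    move=> x; rewrite -(shiftG HaP' HaQ') Heq /G Hq' Hp' I1.
    by rewrite -/(G p' q' x) I1.
  have := IH (map S P) (map S Q) p' q'.
  rewrite !size_map => H.
  have Hp0 : 0 < size p by case: (p) mp.
  have Hq0 : 0 < size q by case: (q) mq.
  have Hs1 : size p' + size q' <= n by move: Hn Hsp Hsq Hp0 Hq0; clear; lia.
  have := H Hs1 (UNF_map U) Heq'; move: Hsp Hsq Hp0 Hq0; clear; rewrite -?subn1; lia.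
-
  subst m.
  case hPp: ((h \in P) && (h \in p)).
    case/andP: hPp => hP hp.
    have EP := @sorted_head _ _ SP HaP hP.
    have [p' [Hsp Hp']] := @peelP p h hp Hap.
    have Heq' : forall x, G (behead P) Q x = G p' q x.
      move=> x; have := congr1 (fneg h) (Heq x).
      by rewrite {1}EP G_consP /G Hp' !I1.
    rewrite EP /=; have := IH (behead P) Q p' q.
    have : 0 < size p by case: (p) hp.
    move=> Hp0 H.
    have Hs1 : size p' + size q <= n by move: Hn Hsp Hp0; clear; rewrite -?subn1; lia.
    have U0 : UNF (h :: behead P) Q by rewrite -EP.
    have U1 := @UNF_tailP h (behead P) Q U0 HaQ.
    have := H Hs1 U1 Heq'; move: Hsp Hp0; clear; rewrite -?subn1; lia.
  case hQq: ((h \in Q) && (h \in q)).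
    case/andP: hQq => hQ hq.
    have EQ := @sorted_head _ _ SQ HaQ hQ.
    have [q' [Hsq Hq']] := @peelN q h hq Haq.
    have Heq' : forall x, G P (behead Q) x = G p q' x.
      move=> x; have := Heq (fpos h x).
      by rewrite {1}EQ G_consQ /G Hq' !I1.
    rewrite EQ /=; have := IH P (behead Q) p q'.
    have : 0 < size q by case: (q) hq.
    move=> Hq0 H.
    have Hs1 : size p + size q' <= n by move: Hn Hsq Hq0; clear; rewrite -?subn1; lia.
    have U0 : UNF P (h :: behead Q) by rewrite -EQ.
    have U1 := @UNF_tailQ h P (behead Q) U0 HaP.
    have := H Hs1 U1 Heq'; move: Hsq Hq0; clear; rewrite -?subn1; lia.
  exfalso.
  move: Hh Hm; rewrite !mem_cat.
  case hP: (h \in P); case hp: (h \in p); case hQ: (h \in Q); case hq: (h \in q);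
    rewrite ?hP ?hp ?hQ ?hq //= in hPp hQq * => _ _.
  + have [H1 _] := @caseA P Q h hP HaP (@all_lt _ _ HaQ (negbT hQ)) (scons true ones).
    have := @caseB p q h hq (@all_lt _ _ Hap (negbT hp)) Haq ones.
    by rewrite -Heq H1 ltnn.
  + have [H1 _] := @caseA p q h hp Hap (@all_lt _ _ Haq (negbT hq)) (scons true ones).
    have := @caseB P Q h hQ (@all_lt _ _ HaP (negbT hP)) HaQ ones.
    by rewrite Heq H1 ltnn.
Qed.

Definition Bl (a r : seq nat) : seq nat :=
  flatten [seq nseq rk ak | '(ak, rk) <- zip a r].

Lemma nf_wordE a r b s : nf_word a r b s =
  map (fun i => (i, true)) (Bl a r) ++ rev (map (fun i => (i, false)) (Bl b s)).
Proof.
rewrite /nf_word /Bl !map_flatten rev_flatten; congr (flatten _ ++ flatten _).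
- by rewrite -map_comp; apply: eq_map => -[x k] /=; rewrite map_nseq.
- by rewrite -!map_comp; congr rev; apply: eq_map => -[x k] /=; rewrite map_nseq rev_nseq.
Qed.

Lemma Bl_path a r x0 : sorted ltn a -> all (fun y => x0 <= y) a ->
  all (fun k => 0 < k) r -> size a = size r -> path leq x0 (Bl a r).
Proof.
elim: a r x0 => [|y a IH] [|k r] x0 //= Sa /andP[Hx0 Ha] /andP[Hk Hr] [Hsz].
rewrite /Bl /= -/(Bl a r).
case: k Hk => // k _ /=; rewrite Hx0 /= cat_path; apply/andP; split.
  by elim: k => //= k ->; rewrite leqnn.
have -> : last y (nseq k y) = y by elim: k.
apply: IH => //; first exact: path_sorted Sa.
have := order_path_min ltn_trans Sa; move/allP => H; apply/allP => z /H; lia.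
Qed.

Lemma Bl_sorted a r : sorted ltn a -> all (fun k => 0 < k) r -> size a = size r ->
  sorted leq (Bl a r).
Proof.
move=> Sa Hr Hs; apply: (@path_sorted _ _ 0); apply: Bl_path => //.
by apply/allP.
Qed.

Lemma Bl_mem a r i : all (fun k => 0 < k) r -> size a = size r ->
  (i \in Bl a r) = (i \in a).
Proof.
elim: a r => [|y a IH] [|k r] //= /andP[Hk Hr] [Hsz].
by rewrite /Bl /= -/(Bl a r) mem_cat mem_nseq Hk /= IH // in_cons.
Qed.

Lemma act_pos P x : act (map (fun i => (i, true)) P) x = actP P x.
Proof. by elim: P => //= c P IH; rewrite /act /= -/(act _ _) IH. Qed.

Lemma act_neg Q x : act (rev (map (fun i => (i, false)) Q)) x = actN Q x.
Proof.
elim: Q x => //= c Q IH x.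
by rewrite rev_cons -cats1 act_cat /act /= -/(act _ _) IH.
Qed.

Unset Implicit Arguments.

Theorem lemma2p1 (w alpha : word) :
  unique_normal_form alpha -> F_eq alpha w ->
  forall beta : word, F_eq beta w -> wlen alpha <= wlen beta.
Proof.
move=> [a [r [b [s [[Hsr [Hss [Hr [Hs [Sa Sb]]]]] [Hc ->]]]]]] Haw beta Hbw.
have U : UNF (Bl a r) (Bl b s).
  split; try exact: Bl_sorted.
  by move=> i; rewrite !Bl_mem //; apply: Hc.
have Hab := sound (F_trans Haw (F_sym Hbw)).
have [p [q [Hs' Hx]]] := S1 beta.
have HG : forall x, G (Bl a r) (Bl b s) x = G p q x.
  move=> x; rewrite -Hx -Hab nf_wordE act_cat act_neg act_pos //.
rewrite /wlen nf_wordE size_cat size_rev !size_map.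
apply: leq_trans Hs'.
exact: (@core (size p + size q)).
Qed.
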